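(* Fix $t>1$ and define the sequence $(g_{n,t})_{n\ge0}$ by $g_{0,t}=1$ and $g_{n,t}=n\,g_{n-1,t}^{\,t}$ for $n\ge1$. Then for all $n\ge0$, $$g_{n,t}=\sigma_t^{\,t^n}\exp\!\left[\frac1t\frac{\partial\Phi}{\partial s}\!\left(\frac1t,0,n+1\right)\right]=\sigma_t^{\,t^n}\prod_{m=1}^{\infty}(m+n)^{-1/t^m},$$ where $\sigma_t=\prod_{n=1}^{\infty}n^{1/t^n}$.
   Context: $\Phi(z,s,u)$ is the Lerch transcendent: for $|z|<1$, $u>0$ and all $s\in\mathbb{C}$, $\Phi(z,s,u)=\sum_{n=0}^{\infty}\frac{z^n}{(n+u)^s}$; $\frac{\partial\Phi}{\partial s}$ is its partial derivative in $s$. *)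

(* Defs.v *)
From Stdlib Require Import Reals.
From Coquelicot Require Import Coquelicot.
Open Scope R_scope.

Definition LerchPhi (z s u : R) : R :=
  Series (fun k : nat => z ^ k / Rpower (INR k + u) s).

Fixpoint g (t : R) (n : nat) : R :=
  match n with
  | O => 1
  | S m => INR (S m) * Rpower (g t m) t
  end.

Fixpoint prod1 (f : nat -> R) (N : nat) : R :=
  match N with
  | O => 1
  | S M => prod1 f M * f (S M)
  end.

Definition sigma_partial (t : R) (N : nat) : R :=
  prod1 (fun k => Rpower (INR k) (/ t ^ k)) N.

Definition sigmaT (t : R) : R := real (Lim_seq (sigma_partial t)).

(* Main.v *)
Require Import Defs.
From Stdlib Require Import Reals Lra Lia.
From Coquelicot Require Import Coquelicot.
Open Scope R_scope.

Lemma ln_lt_x x : 0 < x -> ln x < x.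
Proof.
  intro hx. rewrite <- (ln_exp x) at 2. apply ln_increasing; auto.
  assert (x <> 0) by lra; pose proof (exp_ineq1 x H). lra.
Qed.

Lemma lim_inv_shift c : 1 <= c -> is_lim_seq (fun k => / (INR k + c)) 0.
Proof.
  intro hc.
  assert (H : is_lim_seq (fun k => INR k + c) p_infty).
  { eapply is_lim_seq_plus. apply is_lim_seq_INR. apply is_lim_seq_const. simpl. constructor. }
  pose proof (is_lim_seq_inv _ _ H) as H2. simpl in H2. apply H2. discriminate.
Qed.

Lemma ex_series_poly t c : 1 < t -> 1 <= c ->
  ex_series (fun k => (/t)^k * (INR k + c)^2).
Proof.
  intros ht hc.
  assert (pos : forall k, 0 < INR k + c) by (intro k; pose proof (pos_INR k); lra).
  apply ex_series_ext with (fun k => Rabs ((/t)^k * (INR k + c)^2)).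
  { intro k. apply Rabs_pos_eq. apply Rmult_le_pos. apply pow_le. apply Rlt_le, Rinv_0_lt_compat; lra. apply pow2_ge_0. }
  apply ex_series_DAlembert with (/t).
  - rewrite <- Rinv_1. apply Rinv_lt_contravar; lra.
  - intro k. apply Rmult_integral_contrapositive; split. apply pow_nonzero. apply Rinv_neq_0_compat; lra.
    apply pow_nonzero. specialize (pos k); lra.
  - apply is_lim_seq_ext with (fun k => /t * (1 + /(INR k + c)) * (1 + /(INR k + c))).
    + intro k. rewrite S_INR. specialize (pos k).
      rewrite Rabs_pos_eq.
      * simpl. field. repeat split; try lra. apply pow_nonzero. apply Rinv_neq_0_compat; lra.
      * apply Rle_mult_inv_pos.
        apply Rmult_le_pos. apply pow_le. apply Rlt_le, Rinv_0_lt_compat; lra. apply pow2_ge_0.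
        apply Rmult_lt_0_compat. apply pow_lt. apply Rinv_0_lt_compat; lra. apply pow_lt; lra.
    + replace (Finite (/t)) with (Finite (/t * (1 + 0) * (1 + 0))) by (f_equal; ring).
      apply is_lim_seq_mult'. apply is_lim_seq_mult'. apply is_lim_seq_const.
      apply is_lim_seq_plus'. apply is_lim_seq_const. apply lim_inv_shift; auto.
      apply is_lim_seq_plus'. apply is_lim_seq_const. apply lim_inv_shift; auto.
Qed.
Definition term (t c s : R) (k : nat) := (/t)^k * exp (-(s * ln (INR k + c))).
Definition dterm (t c s : R) (k : nat) := -((/t)^k * ln (INR k + c) * exp (-(s * ln (INR k + c)))).

Lemma exp_bound c k y : 1 <= c -> Rabs y < 1 -> exp (-(y * ln (INR k + c))) <= INR k + c.
Proof.
  intros hc hy. pose proof (pos_INR k).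
  assert (L0 : 0 <= ln (INR k + c)) by (rewrite <- ln_1; apply ln_le; lra).
  apply Rabs_def2 in hy.
  rewrite <- (exp_ln (INR k + c)) at 2 by lra.
  destruct (Req_dec (-(y * ln (INR k + c))) (ln (INR k + c))) as [E|E].
  - rewrite E; lra.
  - apply Rlt_le, exp_increasing. nra.
Qed.

Lemma term_bound t c k y : 1 < t -> 1 <= c -> Rabs y < 1 ->
  Rabs (term t c y k) <= (/t)^k * (INR k + c)^2.
Proof.
  intros ht hc hy. unfold term. pose proof (pos_INR k).
  assert (0 < (/t)^k) by (apply pow_lt, Rinv_0_lt_compat; lra).
  pose proof (exp_bound c k y hc hy). pose proof (exp_pos (-(y * ln (INR k + c)))).
  rewrite Rabs_pos_eq by (apply Rmult_le_pos; lra).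
  apply Rmult_le_compat_l; [lra|]. nra.
Qed.

Lemma dterm_bound t c k y : 1 < t -> 1 <= c -> Rabs y < 1 ->
  Rabs (dterm t c y k) <= (/t)^k * (INR k + c)^2.
Proof.
  intros ht hc hy. unfold dterm. pose proof (pos_INR k).
  assert (0 < (/t)^k) by (apply pow_lt, Rinv_0_lt_compat; lra).
  pose proof (exp_bound c k y hc hy). pose proof (exp_pos (-(y * ln (INR k + c)))).
  assert (L0 : 0 <= ln (INR k + c)) by (rewrite <- ln_1; apply ln_le; lra).
  pose proof (ln_lt_x (INR k + c) ltac:(lra)).
  rewrite Rabs_Ropp, Rabs_pos_eq by (repeat apply Rmult_le_pos; lra).
  rewrite Rmult_assoc. apply Rmult_le_compat_l; [lra|].
  simpl. rewrite Rmult_1_r. apply Rmult_le_compat; lra.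
Qed.

Lemma ex_series_bounded t c (f : nat -> R) : 1 < t -> 1 <= c ->
  (forall k, Rabs (f k) <= (/t)^k * (INR k + c)^2) -> ex_series f.
Proof.
  intros ht hc H. apply (@ex_series_le R_AbsRing R_CompleteNormedModule f (fun k => (/t)^k * (INR k + c)^2)).
  intro k. apply H. apply ex_series_poly; auto.
Qed.

Lemma series_Un_cv f : ex_series f -> Un_cv (sum_f_R0 f) (Series f).
Proof.
  intro H. apply Series_correct in H. apply is_series_Reals in H. exact H.
Qed.

Lemma Lerch_eq t c s : LerchPhi (/t) s c = Series (term t c s).
Proof.
  unfold LerchPhi. apply Series_ext. intro k. unfold term, Rpower.
  rewrite exp_Ropp. reflexivity.
Qed.

Lemma SP_derive t c n x :
  derivable_pt_lim (SP (fun k s => term t c s k) n) x (SP (fun k s => dterm t c s k) n x).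
Proof.
  apply is_derive_Reals. induction n.
  - unfold SP; simpl. unfold term, dterm. auto_derive; auto. simpl; ring.
  - unfold SP in *; simpl.
    apply (is_derive_plus (fun s => sum_f_R0 (fun k => term t c s k) n) (fun s => term t c s (S n))).
    exact IHn. unfold term, dterm. generalize (S n) as m; intro m. auto_derive; auto. ring.
Qed.

Lemma Lerch_derive t c : 1 < t -> 1 <= c ->
  is_derive (fun s => LerchPhi (/t) s c) 0 (- Series (fun k => (/t)^k * ln (INR k + c))).
Proof.
  intros ht hc.
  apply is_derive_ext with (fun s => Series (term t c s)).
  { intro s; symmetry; apply Lerch_eq. }
  set (r := mkposreal 1 Rlt_0_1).
  assert (CV : CVN_r (fun k s => dterm t c s k) r).
  { exists (fun k => (/t)^k * (INR k + c)^2).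
    exists (Series (fun k => (/t)^k * (INR k + c)^2)). split.
    - assert (E : is_series (fun k => Rabs ((/t)^k * (INR k + c)^2)) (Series (fun k => (/t)^k * (INR k + c)^2))).
      { apply is_series_ext with (fun k => (/t)^k * (INR k + c)^2).
        intro k. symmetry. apply Rabs_pos_eq. apply Rmult_le_pos. apply pow_le. apply Rlt_le, Rinv_0_lt_compat; lra. apply pow2_ge_0.
        apply Series_correct, ex_series_poly; auto. }
      apply is_series_Reals in E. exact E.
    - intros k y hy. apply dterm_bound; auto. unfold Boule in hy. simpl in hy. rewrite Rminus_0_r in hy. exact hy. }
  destruct (CVN_CVU_r _ r CV 0) as [e He].
  { rewrite Rabs_R0. simpl. lra. }
  set (d := mkposreal (Rmin e 1) (Rmin_pos _ _ (cond_pos e) Rlt_0_1)).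
  assert (Bd : forall y, Boule 0 d y -> Rabs y < 1 /\ Boule 0 e y).
  { intros y hy. unfold Boule in *. simpl in *. rewrite Rminus_0_r in *.
    pose proof (Rmin_l e 1). pose proof (Rmin_r e 1). split; lra. }
  apply is_derive_Reals.
  replace (- Series (fun k => (/t)^k * ln (INR k + c)))
    with ((fun x => Series (fun k => dterm t c x k)) 0).
  2:{ rewrite <- Series_opp. apply Series_ext. intro k. unfold dterm.
      rewrite Rmult_0_l, Ropp_0, exp_0. ring. }
  apply (CVU_derivable (fun n => SP (fun k s => term t c s k) n) (fun n => SP (fun k s => dterm t c s k) n)
    (fun s => Series (term t c s)) (fun x => Series (fun k => dterm t c x k)) 0 d).
  - intros eps heps. destruct (He eps heps) as [N HN]. exists N. intros m y hm hy.
    apply HN; auto. apply Bd; auto.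
  - intros x hx. unfold SP. apply series_Un_cv. apply ex_series_bounded with t c; auto.
    intro k. apply term_bound; auto. apply Bd; auto.
  - intros n x _. apply SP_derive.
  - unfold Boule. rewrite Rminus_0_r, Rabs_R0. apply cond_pos.
Qed.

Definition Sg (t c : R) := Series (fun k => (/t)^k * ln (INR k + c)).

Lemma ex_Sg t c : 1 < t -> 1 <= c -> ex_series (fun k => (/t)^k * ln (INR k + c)).
Proof.
  intros ht hc. apply ex_series_bounded with t c; auto. intro k.
  pose proof (pos_INR k).
  assert (0 < (/t)^k) by (apply pow_lt, Rinv_0_lt_compat; lra).
  assert (L0 : 0 <= ln (INR k + c)) by (rewrite <- ln_1; apply ln_le; lra).
  pose proof (ln_lt_x (INR k + c) ltac:(lra)).
  rewrite Rabs_pos_eq by (apply Rmult_le_pos; lra).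
  apply Rmult_le_compat_l; [lra|]. simpl. nra.
Qed.

Lemma Sg_rec t n : 1 < t ->
  Sg t (INR n + 1) = ln (INR n + 1) + / t * Sg t (INR (S n) + 1).
Proof.
  intro ht. unfold Sg. rewrite Series_incr_1.
  2:{ apply ex_Sg; auto. pose proof (pos_INR n); lra. }
  simpl pow. rewrite Rmult_1_l. replace (INR 0 + (INR n + 1)) with (INR n + 1) by (simpl; ring).
  f_equal. rewrite <- Series_scal_l. apply Series_ext. intro k.
  rewrite !S_INR. replace (INR k + 1 + (INR n + 1)) with (INR k + (INR n + 1 + 1)) by ring. ring.
Qed.

Fixpoint sumN (F : nat -> R) (N : nat) : R :=
  match N with O => 0 | S M => sumN F M + F (S M) end.

Lemma prod_exp (f e : nat -> R) N :
  prod1 (fun m => Rpower (f m) (e m)) N = exp (sumN (fun m => e m * ln (f m)) N).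
Proof.
  induction N; simpl. now rewrite exp_0.
  rewrite IHN, exp_plus. reflexivity.
Qed.

Lemma sumN_shift F N : sumN F (S N) = sum_f_R0 (fun k => F (S k)) N.
Proof.
  induction N. simpl. ring.
  change (sumN F (S (S N))) with (sumN F (S N) + F (S (S N))). rewrite IHN. reflexivity.
Qed.

Lemma lim_exp_sum t c a (F : nat -> R) : 1 < t -> 1 <= c ->
  (forall k, F (S k) = a * ((/t)^k * ln (INR k + c))) ->
  is_lim_seq (fun N => exp (sumN F N)) (exp (a * Sg t c)).
Proof.
  intros ht hc HF.
  apply (is_lim_seq_continuous exp (sumN F)).
  { apply derivable_continuous_pt, derivable_pt_exp. }
  apply is_lim_seq_incr_1.
  apply is_lim_seq_ext with (sum_f_R0 (fun k => F (S k))).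
  { intro N. symmetry. apply sumN_shift. }
  apply is_lim_seq_Reals.
  assert (E : a * Sg t c = Series (fun k => F (S k))).
  { unfold Sg. rewrite <- Series_scal_l. apply Series_ext. intro k. symmetry; apply HF. }
  rewrite E. apply series_Un_cv.
  apply ex_series_ext with (fun k => a * ((/t)^k * ln (INR k + c))).
  { intro k. symmetry; apply HF. }
  apply (@ex_series_scal_l R_AbsRing R_CompleteNormedModule). apply ex_Sg; auto.
Qed.

Theorem theorem20 (t : R) (ht : 1 < t) (n : nat) :
  (* sigma_t is a convergent infinite product *)
  is_lim_seq (sigma_partial t) (sigmaT t) /\
  (* dPhi/ds (1/t, s, n+1) exists at s = 0 *)
  is_derive (fun s => LerchPhi (/ t) s (INR n + 1)) 0
            (Derive (fun s => LerchPhi (/ t) s (INR n + 1)) 0) /\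
  (* first equality *)
  g t n = Rpower (sigmaT t) (t ^ n) *
          exp (/ t * Derive (fun s => LerchPhi (/ t) s (INR n + 1)) 0) /\
  (* second equality: sigma_t^{t^n} prod_{m>=1} (m+n)^{-1/t^m} converges to g_{n,t} *)
  is_lim_seq (fun N => Rpower (sigmaT t) (t ^ n) *
                       prod1 (fun m => Rpower (INR m + INR n) (- / t ^ m)) N)
             (g t n).
Proof.
  set (T := / t * Sg t 1).
  assert (Hsig : is_lim_seq (sigma_partial t) (exp T)).
  { apply is_lim_seq_ext with (fun N => exp (sumN (fun m => / t ^ m * ln (INR m)) N)).
    { intro N. unfold sigma_partial. symmetry. apply prod_exp. }
    apply lim_exp_sum; [auto|lra|]. intro k. rewrite S_INR, <- Rinv_pow by lra. simpl. field; split; try lra; apply pow_nonzero; lra. }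
  assert (HsT : sigmaT t = exp T).
  { unfold sigmaT. rewrite (is_lim_seq_unique _ _ Hsig). reflexivity. }
  assert (hc : 1 <= INR n + 1) by (pose proof (pos_INR n); lra).
  pose proof (Lerch_derive t (INR n + 1) ht hc) as HD.
  assert (HDv : Derive (fun s => LerchPhi (/ t) s (INR n + 1)) 0 = - Sg t (INR n + 1)).
  { exact (is_derive_unique _ _ _ HD). }
  assert (HG : forall n, g t n = exp (t ^ n * T - / t * Sg t (INR n + 1))).
  { clear HD HDv hc. intro m. induction m.
    - simpl g. simpl INR. replace (0 + 1) with 1 by ring. unfold T. replace (t ^ 0 * (/ t * Sg t 1) - / t * Sg t 1) with 0 by (simpl; ring). now rewrite exp_0.
    - change (g t (S m)) with (INR (S m) * Rpower (g t m) t). rewrite IHm. unfold Rpower. rewrite ln_exp.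
      rewrite <- (exp_ln (INR (S m))) at 1 by (apply lt_0_INR; lia).
      rewrite <- exp_plus. f_equal. rewrite (Sg_rec t m ht). rewrite S_INR. simpl pow.
      field. lra. }
  assert (HR : Rpower (sigmaT t) (t ^ n) = exp (t ^ n * T)).
  { unfold Rpower. rewrite HsT, ln_exp. f_equal. }
  split; [|split; [|split]].
  - rewrite HsT. exact Hsig.
  - rewrite HDv. exact HD.
  - rewrite HDv, HR, HG, <- exp_plus. f_equal. ring.
  - rewrite HR, HG.
    replace (exp (t ^ n * T - / t * Sg t (INR n + 1))) with
      (exp (t ^ n * T) * exp ((- / t) * Sg t (INR n + 1))) by (rewrite <- exp_plus; f_equal; ring).
    apply is_lim_seq_mult'. apply is_lim_seq_const.
    apply is_lim_seq_ext with (fun N => exp (sumN (fun m => - / t ^ m * ln (INR m + INR n)) N)).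
    { intro N. symmetry. apply prod_exp. }
    apply lim_exp_sum; auto. intro k. rewrite S_INR, <- Rinv_pow by lra.
    replace (INR k + 1 + INR n) with (INR k + (INR n + 1)) by ring. simpl. field; split; try lra; apply pow_nonzero; lra.
Qed.
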